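(* Let $f:\mathbb{R}^d\to\mathbb{R}$, let $h:\mathbb{R}^d\to\mathbb{R}\cup\{+\infty\}$, and let $g:\mathbb{R}^d\to\mathbb{R}$ be $l$-Lipschitz continuous. Let $\lambda>0$, and suppose that for every $w$ the minimum of $x\mapsto\frac{1}{2\lambda}\|w-x\|_2^2+g(x)$ is attained; let $e_\lambda g(w)=\min_x\left(\frac{1}{2\lambda}\|w-x\|_2^2+g(x)\right)$. Let $\Phi=f+g+h$ and $\tilde\Phi_\lambda=f+e_\lambda g+h$. Let $w^*$ be a global minimizer of $\Phi$ and $w^*_\lambda$ a global minimizer of $\tilde\Phi_\lambda$. Then for all $w$ (with $\Phi(w)$ finite), $$\tilde\Phi_\lambda(w)-\tilde\Phi_\lambda(w^*_\lambda)\le\Phi(w)-\Phi(w^* )+\frac{l^2\lambda}{2}.$$ *)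

(* Defs.v *)
From HB Require Import structures.
From mathcomp Require Import all_boot all_order all_algebra.
From mathcomp Require Import all_classical all_reals.
From mathcomp Require Import ereal.
Set Implicit Arguments. Unset Strict Implicit. Unset Printing Implicit Defensive.
Import Order.TTheory GRing.Theory Num.Theory.
Local Open Scope ring_scope.

Definition norm2 (R : realType) (d : nat) (v : 'rV[R]_d) : R :=
  Num.sqrt (\sum_(i < d) (v ord0 i) ^+ 2).

Definition moreau_obj (R : realType) (d : nat) (lam : R) (g : 'rV[R]_d -> R)
  (w x : 'rV[R]_d) : R :=
  (2 * lam)^-1 * (norm2 (w - x)) ^+ 2 + g x.

Definition lipschitz (R : realType) (d : nat) (l : R) (g : 'rV[R]_d -> R) : Prop :=
  forall x y, `|g x - g y| <= l * norm2 (x - y).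

Definition is_moreau_envelope (R : realType) (d : nat) (lam : R)
  (g : 'rV[R]_d -> R) (e : 'rV[R]_d -> R) : Prop :=
  forall w, (exists x, e w = moreau_obj lam g w x) /\
            (forall x, e w <= moreau_obj lam g w x).

(* Main.v *)
Require Import Defs.
From HB Require Import structures.
From mathcomp Require Import all_boot all_order all_algebra.
From mathcomp Require Import all_classical all_reals.
From mathcomp Require Import ereal.
From mathcomp Require Import ring lra.
Import Order.TTheory GRing.Theory Num.Theory.
Local Open Scope ring_scope.
Lemma env_le (R : realType) (d : nat) (g : 'rV[R]_d -> R) lam e w :
  is_moreau_envelope lam g e -> (e w <= g w)%R.
Proof.
move=> /(_ w) [_ /(_ w)]; rewrite /moreau_obj /norm2 subrr.
under eq_bigr do rewrite mxE expr0n /=.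
by rewrite big1 // sqrtr0 expr0n /= mulr0 add0r.
Qed.

Lemma env_ge (R : realType) (d : nat) (g : 'rV[R]_d -> R) l lam e v :
  lipschitz l g -> (0 < lam)%R -> is_moreau_envelope lam g e ->
  (g v - l ^+ 2 * lam / 2 <= e v)%R.
Proof.
move=> Hl Hlam /(_ v) [[x ->] _]; rewrite /moreau_obj.
have := Hl v x; set t := norm2 (v - x) => H.
have Ht : (g v - g x <= l * t)%R by apply: le_trans (ler_norm _) H.
set k := ((2 * lam)^-1)%R.
have Hk : (k * (2 * lam) = 1)%R by rewrite mulVf // gt_eqF // mulr_gt0.
have Hk0 : (0 < k)%R by rewrite invr_gt0 mulr_gt0.
have Hsq : (0 <= k * (t - l * lam) ^+ 2)%R by apply: mulr_ge0; [exact: ltW | exact: sqr_ge0].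
have E : (k * (t - l * lam) ^+ 2 = k * t ^+ 2 - l * t * (k * (2 * lam)) + l ^+ 2 * lam / 2 * (k * (2 * lam)))%R.
  by rewrite /k; field; rewrite ?pnatr_eq0 ?gt_eqF // ?mulr_gt0.
rewrite Hk !mulr1 in E.
lra.
Qed.

Local Open Scope ereal_scope.

Theorem mainTheorem4 (R : realType) (d : nat)
  (f g : 'rV[R]_d -> R) (h : 'rV[R]_d -> \bar R) (l lam : R)
  (e : 'rV[R]_d -> R) (wstar wstarlam : 'rV[R]_d) :
  (forall x, h x != -oo) ->
  lipschitz l g ->
  (0 < lam)%R ->
  is_moreau_envelope lam g e ->
  let Phi := fun w => (f w + g w)%:E + h w in
  let Phit := fun w => (f w + e w)%:E + h w in
  (forall w, Phi wstar <= Phi w) ->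
  (forall w, Phit wstarlam <= Phit w) ->
  forall w, Phi w \is a fin_num ->
    Phit w - Phit wstarlam <= Phi w - Phi wstar + (l ^+ 2 * lam / 2)%:E.
Proof.
move=> hN Hl Hlam He Phi Phit H1 H2 w Hw.
have A := @env_le _ _ _ _ _ w He.
have B := @env_ge _ _ _ _ _ _ wstarlam Hl Hlam He.
have H1w := H1 wstarlam; have H2w := H2 w.
rewrite /Phi /Phit in Hw H1w H2w *.
move: (hN w) (hN wstar) (hN wstarlam) Hw H1w H2w.
case: (h w) => [a| |] //; case: (h wstar) => [b| |] //;
  case: (h wstarlam) => [c| |] //= _ _ _ _; rewrite ?lee_fin //=.
move=> *; lra.
Qed.
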